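(* Let $h>0$ and $n\ge1$. For $(\theta_1,\dots,\theta_n)$ with $1>\theta_1>\theta_2>\cdots>\theta_n>0$ let $\Theta\in\mathbb{R}^{n\times n}$ be the matrix with entries $\Theta_{ii}=\frac{1}{4h}\cot(\pi\theta_i)$ and, for $i\neq j$, $\Theta_{ij}=\frac{1}{4h}\left(\cot\left(\pi\frac{\theta_i+\theta_j}{2}\right)-\cot\left(\pi\frac{\theta_i-\theta_j}{2}\right)\right)$. Then there exists $(\theta_1,\dots,\theta_n)\in(0,1)^n$ with $1>\theta_1>\theta_2>\cdots>\theta_n>0$ for which $\Theta$ is singular. *)

(* Defs.v *)
From HB Require Import structures.
From mathcomp Require Import all_boot all_order all_algebra.
From mathcomp Require Import Rstruct.
From Stdlib Require Import Reals.

Set Implicit Arguments.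
Unset Strict Implicit.
Unset Printing Implicit Defensive.

(* cot x = cos x / sin x (only evaluated where sin x <> 0 in the statement) *)
Definition cot (x : R) : R := Rdiv (cos x) (sin x).

Definition Theta (h : R) (n : nat) (theta : 'I_n -> R) : 'M[R]_n :=
  \matrix_(i < n, j < n)
    if i == j then Rdiv (cot (PI * theta i)) (4 * h)
    else Rdiv (cot (PI * ((theta i + theta j) / 2)) - cot (PI * ((theta i - theta j) / 2))) (4 * h).

(* Main.v *)
Require Import Defs.
From mathcomp Require Import all_boot all_order all_algebra.
From mathcomp Require Import Rstruct.
From Stdlib Require Import Reals.
From Stdlib Require Import Lra Lia ZArith.
From mathcomp Require Import zify.

Section Trig.
Local Open Scope R_scope.

Definition sg (k : Z) : R := if Z.even k then 1 else -1.
Definition bet (n : nat) : R := PI / (2 * INR n).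
Definition g (n : nat) (k : Z) : R := sg k * cot (IZR k * bet n).

Lemma cot_opp x : cot (- x) = - cot x.
Proof. unfold cot, Rdiv. rewrite cos_neg sin_neg Rinv_opp. ring. Qed.

Lemma cot_PI x : cot (x + PI) = cot x.
Proof. unfold cot, Rdiv. rewrite neg_cos neg_sin Rinv_opp. ring. Qed.

Lemma sg_add a b : sg (a + b) = sg a * sg b.
Proof. unfold sg. rewrite Z.even_add. destruct (Z.even a), (Z.even b); simpl; ring. Qed.

Lemma sg_opp a : sg (- a) = sg a.
Proof. unfold sg. rewrite Z.even_opp. reflexivity. Qed.

Lemma sg_2 a : sg (2 * a) = 1.
Proof. unfold sg. rewrite Z.even_mul. reflexivity. Qed.

Lemma sg_1 : sg 1 = -1.
Proof. reflexivity. Qed.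

Lemma sg_rel1 a b : sg (a - 1) * sg (a + b - 1) = sg b.
Proof.
  rewrite <- sg_add. replace (a - 1 + (a + b - 1))%Z with (b + 2 * (a - 1))%Z by lia.
  rewrite sg_add sg_2. ring.
Qed.

Lemma sg_rel2 a b : sg (a - 1) * sg (a - b) = - sg b.
Proof.
  rewrite <- sg_add. replace (a - 1 + (a - b))%Z with (- b + 1 + 2 * (a - 1))%Z by lia.
  rewrite !sg_add sg_2 sg_opp sg_1. ring.
Qed.

Lemma sg_neq0 a : sg a <> 0.
Proof. unfold sg. destruct (Z.even a); lra. Qed.

Lemma g_odd n k : g n (- k) = - g n k.
Proof.
  unfold g. rewrite sg_opp opp_IZR. replace (- IZR k * bet n) with (- (IZR k * bet n)) by ring.
  rewrite cot_opp. ring.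
Qed.

Lemma g_per n k : (0 < n)%nat -> g n (k + 2 * Z.of_nat n) = g n k.
Proof.
  intros Hn. unfold g. rewrite sg_add sg_2 Rmult_1_r.
  assert (HN : INR n <> 0) by (apply not_0_INR; lia).
  replace (IZR (k + 2 * Z.of_nat n) * bet n) with (IZR k * bet n + PI).
  - rewrite cot_PI. reflexivity.
  - rewrite plus_IZR mult_IZR -INR_IZR_INZ. unfold bet. field. exact HN.
Qed.

Lemma g0 n : g n 0 = 0.
Proof. unfold g, cot, Rdiv. rewrite Rmult_0_l sin_0 Rinv_0. ring. Qed.

Lemma gn n : (0 < n)%nat -> g n (Z.of_nat n) = 0.
Proof.
  intros Hn. unfold g, cot.
  assert (HN : INR n <> 0) by (apply not_0_INR; lia).
  replace (IZR (Z.of_nat n) * bet n) with (PI / 2).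
  - rewrite cos_PI2. unfold Rdiv. ring.
  - rewrite <- INR_IZR_INZ. unfold bet. field. exact HN.
Qed.

End Trig.

From mathcomp Require Import ring.
Import GRing.Theory.
Section S2.
Local Open Scope ring_scope.

Definition F (n : nat) (p : Z) : R :=
  \sum_(j < n) (g n (p + Z.of_nat j)%Z + g n (p - Z.of_nat j - 1)%Z).

Lemma F_step (n : nat) (p : Z) : leq 1 n -> F n (p + 1)%Z = F n p.
Proof.
  case: n => [//|m] _. rewrite /F !big_split /=.
  rewrite [in RHS](big_ord_recl m) [X in _ = _ + X](big_ord_recr m).
  rewrite [in LHS](big_ord_recr m) [X in _ + X = _](big_ord_recl m).
  have E1 : \sum_(i < m) g m.+1 (p + 1 + Z.of_nat (widen_ord (leqnSn m) i))%Z =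
            \sum_(i < m) g m.+1 (p + Z.of_nat (lift ord0 i))%Z.
    by apply: eq_bigr => i _; congr (g _ _); rewrite /= /bump /=; lia.
  have E2 : \sum_(i < m) g m.+1 (p + 1 - Z.of_nat (lift ord0 i) - 1)%Z =
            \sum_(i < m) g m.+1 (p - Z.of_nat (widen_ord (leqnSn m) i) - 1)%Z.
    by apply: eq_bigr => i _; congr (g _ _); rewrite /= /bump /=; lia.
  rewrite E1 E2.
  have E3 : g m.+1 (p + 1 + Z.of_nat (@ord_max m))%Z = g m.+1 (p - Z.of_nat (@ord_max m) - 1)%Z.
    rewrite -(g_per _ (p - Z.of_nat (@ord_max m) - 1)) //; congr (g _ _); rewrite /=; lia.
  have E4 : g m.+1 (p + 1 - Z.of_nat (@ord0 m) - 1)%Z = g m.+1 (p + Z.of_nat (@ord0 m))%Z.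
    congr (g _ _); rewrite /=; lia.
  rewrite E3 E4.
  rewrite /=. ring.
Qed.

Lemma F0 (n : nat) : leq 1 n -> F n 0%Z = 0.
Proof.
  move=> Hn. rewrite /F big_split /=.
  have E : \sum_(j < n) g n (0 - Z.of_nat j - 1)%Z = - \sum_(j < n) g n (Z.of_nat j.+1).
    rewrite -sumrN; apply: eq_bigr => j _.
    rewrite -RoppE -g_odd; congr (g _ _); lia.
  rewrite E. case: n Hn E => [//|m] Hn _.
  rewrite (big_ord_recl m) (big_ord_recr m) /=.
  have E2 : \sum_(i < m) g m.+1 (0 + Z.of_nat (bump 0 i))%Z = \sum_(i < m) g m.+1 (Z.of_nat i.+1).
    by apply: eq_bigr => i _; congr (g _ _); rewrite /bump /=; lia.
  rewrite E2 g0 (gn m.+1) //.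
  rewrite /=. ring.
Qed.

Lemma F_nat (n k : nat) : leq 1 n -> F n (Z.of_nat k) = 0.
Proof.
  move=> Hn; elim: k => [|k IH]; first exact: F0.
  by rewrite Nat2Z.inj_succ -Z.add_1_r F_step.
Qed.

End S2.

From Stdlib Require Import Field_tac.
Import Field_tac.
From Stdlib Require Lra.
Import Lra.

Definition th {n : nat} (i : 'I_n) : R := Rdiv (Rminus (Rmult 2 (INR (n - i))) 1) (Rmult 2 (INR n)).
Definition P {n : nat} (i : 'I_n) : Z := Z.of_nat (n - i).

Lemma entry (h : R) (n : nat) (i j : 'I_n) : Rlt 0 h ->
  Theta h (@th n) i j =
  Rdiv (Rminus (cot (Rmult (IZR (P i + P j - 1)) (bet n))) (cot (Rmult (IZR (P i - P j)) (bet n)))) (Rmult 4 h).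
Proof.
  move=> hp. have Hn : INR n <> 0%R.
    apply: not_0_INR => E. have := ltn_ord i. lia.
  rewrite /Theta mxE. case: eqP => [<-|_].
  - rewrite Z.sub_diag Rmult_0_l.
    have -> : cot 0 = 0%R by rewrite /cot /Rdiv sin_0 Rinv_0 Rmult_0_r.
    rewrite Rminus_0_r. congr (Rdiv (cot _) _).
    rewrite /th /bet /P minus_IZR plus_IZR -INR_IZR_INZ. field. exact: Hn.
  - congr (Rdiv (Rminus (cot _) (cot _)) _);
    rewrite /th /bet /P ?minus_IZR ?plus_IZR -!INR_IZR_INZ; field; exact: Hn.
Qed.

Lemma term (h : R) (a b : Z) (C1 C2 : R) : Rlt 0 h ->
  Rmult (sg b) (Rdiv (Rminus C1 C2) (Rmult 4 h)) =
  Rmult (Rdiv (sg (a - 1)) (Rmult 4 h)) (Rplus (Rmult (sg (a + b - 1)) C1) (Rmult (sg (a - b)) C2)).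
Proof.
  move=> hp.
  have H1 := sg_rel1 a b. have H2 := sg_rel2 a b.
  have -> : Rmult (Rdiv (sg (a - 1)) (Rmult 4 h)) (Rplus (Rmult (sg (a + b - 1)) C1) (Rmult (sg (a - b)) C2))
    = Rdiv (Rplus (Rmult (Rmult (sg (a - 1)) (sg (a + b - 1))) C1) (Rmult (Rmult (sg (a - 1)) (sg (a - b))) C2)) (Rmult 4 h).
    field. lra.
  rewrite H1 H2. field. lra.
Qed.

Lemma my_lt1 (x d : R) : Rlt 0 d -> Rlt x d -> Rlt (Rdiv x d) 1.
Proof.
  move=> hd hx. apply: (Rmult_lt_reg_r d) => //.
  rewrite /Rdiv Rmult_assoc Rinv_l; lra.
Qed.

Local Open Scope ring_scope.
Theorem proposition5p4 (h : R) (n : nat) :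
  Rlt 0 h -> leq 1 n ->
  exists theta : 'I_n -> R,
    (forall i : 'I_n, Rlt 0 (theta i) /\ Rlt (theta i) 1) /\
    (forall i j : 'I_n, ltn i j -> Rlt (theta j) (theta i)) /\
    \det (Theta h theta) = (0 : R).
Proof.
  move=> hp n1.
  have Hn : Rlt 0 (INR n) by apply: lt_0_INR; apply/ltP.
  have Hb : forall i : 'I_n, Rle 1 (INR (n - i)) /\ Rle (INR (n - i)) (INR n).
    move=> i; have := ltn_ord i => li; split.
    - apply: (le_INR 1); apply/leP; lia.
    - apply: le_INR; apply/leP; lia.
  exists (@th n). split; [|split].
  - move=> i. have [b1 b2] := Hb i. rewrite /th. split.
    + apply: Rdiv_lt_0_compat; lra.
    + apply: my_lt1; lra.
  - move=> i j lij. have := ltn_ord j => lj.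
    have L : Rlt (INR (n - j)) (INR (n - i)) by apply: lt_INR; apply/ltP; apply: ltn_sub2l => //; exact: ltn_ord.
    rewrite /th /Rdiv. apply Rmult_lt_compat_r; [apply Rinv_0_lt_compat; lra | lra].
  - apply/eqP. rewrite -det_tr. apply/det0P.
    case: n n1 Hn Hb => [//|m] _ Hn Hb.
    exists (\row_k sg (P k)).
    + apply/eqP => /rowP /(_ ord0). rewrite !mxE. exact: sg_neq0.
    + apply/rowP => j. rewrite !mxE.
      under eq_bigr => i _ do rewrite mxE [X in _ * X]mxE entry // -RmultE (term h (P j)) //.
      have Prev : forall i : 'I_m.+1, P (rev_ord i) = (Z.of_nat i + 1)%Z.
        move=> i; rewrite /P /=; have := ltn_ord i => li.
        have -> : subn m.+1 (subn m.+1 i.+1) = i.+1 by lia.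
        lia.
      rewrite (reindex_inj rev_ord_inj) /=.
      have -> : \sum_(i < m.+1) Rmult (Rdiv (sg (P j - 1)) (Rmult 4 h))
           (Rplus (Rmult (sg (P j + P (rev_ord i) - 1)) (cot (Rmult (IZR (P j + P (rev_ord i) - 1)) (bet m.+1))))
              (Rmult (sg (P j - P (rev_ord i))) (cot (Rmult (IZR (P j - P (rev_ord i))) (bet m.+1)))))
        = Rdiv (sg (P j - 1)) (Rmult 4 h) * F m.+1 (P j).
        rewrite /F mulr_sumr. apply: eq_bigr => i _. rewrite Prev RmultE.
        have -> : (P j + (Z.of_nat i + 1) - 1 = P j + Z.of_nat i)%Z by lia.
        have -> : (P j - (Z.of_nat i + 1) = P j - Z.of_nat i - 1)%Z by lia.
        by [].
      by rewrite /P F_nat // mulr0.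
Qed.
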